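(* Let $A$ be an integral domain, $a,b\in A\setminus\{0\}$ relatively prime, and $s,t\in A$ relatively prime with $a=st$ (where $u,v$ relatively prime means $uA\cap vA=uvA$). Let $A[X]$ be a polynomial ring in one variable and $I=(aX-b)A[X]$. Then the following are equivalent: (a) $\bigcap_{i\ge0}(s^iA[X]+I)=I$; (b) $A\cap\bigcap_{i\ge0}(s^iA[X]+I)=0$. Moreover, $A\cap\bigcap_{i\ge0}(s^iA[X]+I)=W(b,s,t)$.
   Context: For elements $b,s,t$ of a ring $A$, define ideals $W_i,J_i$ ($i\ge0$) by $W_0=A$, $J_0=(W_0:t)=A$, and for $i\ge1$: $W_i=bJ_{i-1}+s^iA$ and $J_i=(W_i:t)$, where $(W:t)=\{x\in A: tx\in W\}$. Set $W(b,s,t)=\bigcap_{i\ge0}W_i$. *)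

(* Defs.v *)
From HB Require Import structures.
From mathcomp Require Import all_boot all_order all_algebra.
Set Implicit Arguments. Unset Strict Implicit. Unset Printing Implicit Defensive.
Import GRing.Theory.
Local Open Scope ring_scope.

Definition rel_prime (A : comRingType) (u v : A) : Prop :=
  forall x : A, ((exists p, x = u * p) /\ (exists q, x = v * q)) <->
                (exists r, x = u * v * r).

(* W_i(b,s,t): W_0 = A, J_i = (W_i : t), W_{i+1} = b J_i + s^{i+1} A *)
Fixpoint Wid (A : comRingType) (b s t : A) (i : nat) : A -> Prop :=
  match i with
  | 0 => fun _ => True
  | k.+1 => fun x => exists y z, Wid b s t k (t * y) /\ x = b * y + s ^+ k.+1 * z
  end.

Definition Jid (A : comRingType) (b s t : A) (i : nat) : A -> Prop :=
  fun x => Wid b s t i (t * x).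

Definition Wbst (A : comRingType) (b s t : A) : A -> Prop :=
  fun x => forall i, Wid b s t i x.

Definition Iid (A : comRingType) (a b : A) : {poly A} -> Prop :=
  fun f => exists h : {poly A}, f = (a%:P * 'X - b%:P) * h.

Definition sIid (A : comRingType) (a b s : A) (i : nat) : {poly A} -> Prop :=
  fun f => exists g h : {poly A}, f = (s ^+ i)%:P * g + (a%:P * 'X - b%:P) * h.

Definition bigsI (A : comRingType) (a b s : A) : {poly A} -> Prop :=
  fun f => forall i, sIid a b s i f.

(* Main.v *)
Require Import Defs.
From HB Require Import structures.
From mathcomp Require Import all_boot all_order all_algebra ring.
Import GRing.Theory.
Local Open Scope ring_scope.

Section S.
Variable A : idomainType.
Implicit Types (u v : A) (p q : {poly A}).

Lemma poly_decomp p : exists q c, p = q * 'X + c%:P.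
Proof.
elim/poly_ind: p => [|p c _]; first by exists 0, 0; rewrite mul0r add0r.
by exists p, c.
Qed.

Lemma poly_divC u p : (forall j, exists r, p`_j = u * r) -> exists q, p = u%:P * q.
Proof.
elim/poly_ind: p => [|p c IH] H; first by exists 0; rewrite mulr0.
have [q Hq] : exists q, p = u%:P * q.
  apply: IH => j; have [r Hr] := H j.+1; exists r; move: Hr.
  by rewrite coefD coefMX coefC /= addr0.
have [r Hr] := H 0%N.
move: Hr; rewrite coefD coefMX coefC /= add0r => ->.
by exists (q * 'X + r%:P); rewrite Hq; ring.
Qed.

Lemma coef_cancel u v p q : v != 0 ->
  (forall x : A, (exists y, x = u * y) -> (exists z, x = v * z) -> exists r, x = u * v * r) ->
  v%:P * p = u%:P * q -> exists p', p = u%:P * p'.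
Proof.
move=> v0 Hrp E; apply: poly_divC => j.
have Ej : v * p`_j = u * q`_j by rewrite -!coefCM E.
have [r Hr] := Hrp (v * p`_j) (ex_intro _ _ Ej) (ex_intro _ _ erefl).
exists r; apply: (mulfI v0); rewrite Hr; ring.
Qed.

Variables (a b s t : A).
Hypotheses (a0 : a != 0) (b0 : b != 0) (Hst : a = s * t)
  (Hab : forall x : A, (exists y, x = a * y) -> (exists z, x = b * z) -> exists r, x = a * b * r)
  (Hsb : forall x : A, (exists y, x = s * y) -> (exists z, x = b * z) -> exists r, x = s * b * r).

Lemma s0 : s != 0. Proof. by apply: contraNneq a0 => s0; rewrite Hst s0 mul0r. Qed.

Lemma cancel_a g : Iid a b (a%:P * g) -> Iid a b g.
Proof.
case=> h E.
have E' : b%:P * h = a%:P * ('X * h - g).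
  by rewrite mulrBr E; ring.
have [h' Hh] := @coef_cancel _ _ _ _ b0 Hab E'.
exists h'; apply: (mulfI (_ : a%:P != 0)); first by rewrite polyC_eq0.
rewrite E Hh; ring.
Qed.

Lemma cancel_s k f : sIid a b s k.+1 (s%:P * f) -> sIid a b s k f.
Proof.
case=> g [h E].
have E' : b%:P * h = s%:P * (t%:P * 'X * h - f + (s ^+ k)%:P * g).
  by rewrite mulrDr mulrBr E Hst exprS; ring.
have [h' Hh] := @coef_cancel _ _ _ _ b0 Hsb E'.
exists g, h'; apply: (mulfI (_ : s%:P != 0)); first by rewrite polyC_eq0 s0.
rewrite E Hh exprS; ring.
Qed.

Lemma KW i c : sIid a b s i c%:P <-> Wid b s t i c.
Proof.
elim: i c => [|k IH] c /=.
  split=> // _; exists c%:P, 0; rewrite expr0 mul1r mulr0 addr0 //.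
split.
- case=> g [h E].
  have [g1 [g0 Eg]] := poly_decomp g.
  have [h1 [h0 Eh]] := poly_decomp h.
  have Ec : c = b * (- h0) + s ^+ k.+1 * g0.
    have := congr1 (horner^~ 0) E.
    rewrite Eg Eh !hornerE /= => ->; ring.
  exists (- h0), g0; split => //.
  apply/IH/cancel_s.
  have HX : ((s ^+ k.+1)%:P * g1 + a%:P * h0%:P + (a%:P * 'X - b%:P) * h1) * 'X = 0.
    have : c%:P - c%:P = 0 :> {poly A} by rewrite subrr.
    rewrite {1}E {1}Ec Eg Eh => <-; ring.
  move/eqP: HX; rewrite mulf_eq0 polyX_eq0 orbF => /eqP HX.
  exists g1, h1; apply: (addrI (a%:P * h0%:P)).
  have L : a%:P * h0%:P + s%:P * (t * - h0)%:P = 0 by rewrite Hst; ring.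
  rewrite L; apply: esym; apply: etrans HX; rewrite exprS; ring.
- case=> y [z [Hy ->]].
  case/IH: Hy => g [h E].
  exists ('X * g + z%:P), ((s%:P * 'X) * h - y%:P).
  have -> : (b * y + s ^+ k.+1 * z)%:P = s%:P * 'X * (t * y)%:P - (a%:P * 'X - b%:P) * y%:P + (s ^+ k.+1 * z)%:P.
    rewrite Hst; ring.
  rewrite E exprS; ring.
Qed.


Lemma red_const f : exists n c h, (a ^+ n)%:P * f = c%:P + (a%:P * 'X - b%:P) * h.
Proof.
elim/poly_ind: f => [|p d [n [c [h E]]]].
  by exists 0%N, 0, 0; rewrite !mulr0 addr0.
exists n.+1, (b * c + a ^+ n.+1 * d), (c%:P + a%:P * 'X * h).
have -> : (a ^+ n.+1)%:P * (p * 'X + d%:P) = a%:P * 'X * ((a ^+ n)%:P * p) + (a ^+ n.+1 * d)%:P.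
  by rewrite exprS; ring.
rewrite E exprS; ring.
Qed.

Lemma I_const c : Iid a b c%:P -> c = 0.
Proof.
case=> h E.
have Hs : (size (c%:P) <= 1)%N by rewrite size_polyC leq_b1.
have Ep : a%:P * 'X - b%:P = a%:P * 'X + (- b)%:P by rewrite rmorphN.
have S2 : size (a%:P * 'X - b%:P) = 2%N.
  by rewrite Ep size_MXaddC polyC_eq0 (negPf a0) /= size_polyC a0.
case: (eqVneq h 0) => [h0 | hn0].
  by move: E; rewrite h0 mulr0 => /eqP; rewrite polyC_eq0 => /eqP.
have X0 : a%:P * 'X - b%:P != 0 by rewrite -size_poly_eq0 S2.
move: Hs; rewrite E size_mul // S2.
have : (0 < size h)%N by rewrite size_poly_gt0.
by case: (size h).
Qed.

End S.

Theorem lemma3p3 (A : idomainType) (a b s t : A) :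
  a != 0 -> b != 0 -> rel_prime a b -> rel_prime s t -> a = s * t ->
  ((forall f : {poly A}, bigsI a b s f <-> Iid a b f) <->
   (forall c : A, bigsI a b s c%:P -> c = 0))
  /\ (forall c : A, bigsI a b s c%:P <-> Wbst b s t c).
Proof.
move=> a0 b0 Rab _ Hst.
have Hab : forall x : A, (exists y, x = a * y) -> (exists z, x = b * z) -> exists r, x = a * b * r.
  by move=> x Hy Hz; apply/(Rab x).
have t0 : t != 0 by apply: contraNneq a0 => t0; rewrite Hst t0 mulr0.
have Hsb : forall x : A, (exists y, x = s * y) -> (exists z, x = b * z) -> exists r, x = s * b * r.
  move=> x [y Hy] [z Hz].
  have [r Hr] : exists r, t * x = a * b * r.
    by apply: Hab; [exists y; rewrite Hy Hst; ring | exists (t * z); rewrite Hz; ring].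
  exists r; apply: (mulfI t0); rewrite Hr Hst; ring.
split; last first.
  move=> c; split=> H i; first by apply/(@KW _ _ _ _ _ a0 b0 Hst Hsb i c).1; apply: H.
  by apply/(@KW _ _ _ _ _ a0 b0 Hst Hsb i c).2; apply: H.
split.
- move=> H c /H; exact: (@I_const _ a b a0 c).
- move=> H f; split; last first.
    by case=> h -> i; exists 0, h; rewrite mulr0 add0r.
  move=> Hf.
  have [n [c [h E]]] := red_const _ a b f.
  have c0 : c = 0.
    apply: H => i; case: (Hf i) => g [k Ek].
    exists ((a ^+ n)%:P * g), ((a ^+ n)%:P * k - h).
    apply: (addIr ((a%:P * 'X - b%:P) * h)); rewrite -E Ek; ring.
  have : Iid a b ((a ^+ n)%:P * f) by exists h; rewrite E c0 add0r.
  elim: n f {Hf E} => [|n IHn] f; first by rewrite expr0 mul1r.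
  rewrite exprSr rmorphM /= -mulrA => /IHn.
  exact: (@cancel_a _ a b a0 b0 Hab).
Qed.
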